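(* Let $J$ be a finite set with $|J|$ even. Then $\mathrm{EvenNAE}_J$ has a 2-decomposition.
   Context: $\mathrm{EvenNAE}_J:\{0,1\}^J\to\{0,1\}$ takes value $1$ exactly on those $x$ with $\sum_{i\in J}x_i$ even and $1\le\sum_{i\in J}x_i\le|J|-1$. For $x\in\{0,1\}^J$ and $S\subseteq J$, $x\oplus\mathbf S$ is $x$ with the coordinates in $S$ flipped. A function $H:\{0,1\}^J\to\mathbb{Q}_{\ge0}$ has a 2-decomposition if there are values $D(x,M)\ge0$, for $x\in\{0,1\}^J$ and $M$ ranging over partitions of $J$ into pairs, with $H(x)=\sum_MD(x,M)$ for all $x$ and $D(x\oplus\mathbf S,M)=D(x,M)$ for all $x,M$ and $S\in M$. *)

(* Defs.v *)
From HB Require Import structures.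
From mathcomp Require Import all_boot all_order all_algebra.
Set Implicit Arguments. Unset Strict Implicit. Unset Printing Implicit Defensive.
Import Order.TTheory GRing.Theory Num.Theory.

(* A point x in {0,1}^J is a finite function J -> bool (true = 1). *)

Definition weight (J : finType) (x : {ffun J -> bool}) : nat := #|[set i | x i]|.

Definition EvenNAE (J : finType) (x : {ffun J -> bool}) : rat :=
  ((~~ odd (weight x)) && (1 <= weight x) && (weight x <= #|J| - 1))%N%:R.

Definition flip (J : finType) (x : {ffun J -> bool}) (S : {set J}) : {ffun J -> bool} :=
  [ffun i => if i \in S then ~~ x i else x i].

Definition pair_partition (J : finType) (M : {set {set J}}) : bool :=
  partition M [set: J] && [forall S in M, #|S| == 2%N].

Definition has_2_decomposition (J : finType) (H : {ffun J -> bool} -> rat) : Prop :=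
  exists D : {ffun J -> bool} -> {set {set J}} -> rat,
    [/\ (forall x M, pair_partition M -> 0 <= D x M)%R,
        (forall x, H x = \sum_(M : {set {set J}} | pair_partition M) D x M)%R
      & (forall x M S, pair_partition M -> S \in M -> D (flip x S) M = D x M)].

(* Main.v *)
Require Import Defs.
From HB Require Import structures.
From mathcomp Require Import all_boot all_order all_algebra all_fingroup zify.
Set Implicit Arguments. Unset Strict Implicit. Unset Printing Implicit Defensive.
Import Order.TTheory GRing.Theory Num.Theory.

Section Constr.
Variable J : finType.
Hypothesis hJ : ~~ odd #|J|.

Lemma n_eq : #|J| = (#|J|./2).*2.
Proof. by have := odd_double_half #|J|; rewrite (negbTE hJ) add0n. Qed.

Lemma lt1 (t : 'I_(#|J|./2)) : (2 * t < #|J|)%N.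
Proof. have := ltn_ord t; rewrite {2}n_eq -muln2; lia. Qed.
Lemma lt2 (t : 'I_(#|J|./2)) : (2 * t + 1 < #|J|)%N.
Proof. have := ltn_ord t; rewrite {2}n_eq -muln2; lia. Qed.

Definition pf (t : 'I_(#|J|./2)) : J := enum_val (Ordinal (lt1 t)).
Definition ps (t : 'I_(#|J|./2)) : J := enum_val (Ordinal (lt2 t)).

Lemma pf_inj : injective pf.
Proof.
move=> t u /enum_val_inj /(congr1 val) /= h; apply: val_inj => /=; lia.
Qed.
Lemma ps_inj : injective ps.
Proof.
move=> t u /enum_val_inj /(congr1 val) /= h; apply: val_inj => /=; lia.
Qed.
Lemma pf_ps t u : pf t != ps u.
Proof.
apply/eqP => /enum_val_inj /(congr1 val) /= h; lia.
Qed.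

Lemma pcover (j : J) : exists t, j = pf t \/ j = ps t.
Proof.
have hi := ltn_ord (enum_rank j).
have hn := n_eq; rewrite -muln2 in hn.
have e := odd_double_half (enum_rank j); rewrite -muln2 in e.
have ht : ((enum_rank j) ./2 < #|J|./2)%N.
  move: hi e hn; set i := nat_of_ord _; set m := #|J|; lia.
exists (Ordinal ht).
rewrite /pf /ps.
case ho: (odd (enum_rank j)); [right|left];
  (transitivity (enum_val (enum_rank j)); first by rewrite enum_rankK);
  congr enum_val; apply: val_inj => /=; move: e; rewrite ho /=; lia.
Qed.

Local Notation K := (#|J|./2).
Definition pairs (g : {perm J}) : {set {set J}} :=
  [set [set g (pf t); g (ps t)] | t : 'I_K].

Lemma pf_ps' t u : (pf t == ps u) = false.
Proof. exact: negbTE (pf_ps t u). Qed.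

Lemma pp_pairs g : pair_partition (pairs g).
Proof.
apply/andP; split; last first.
  apply/forall_inP => S /imsetP[t _ ->].
  by rewrite cards2 (inj_eq perm_inj) pf_ps.
apply/and3P; split.
- apply/eqP/setP => j; rewrite inE; apply/bigcupP.
  have [t ht] := pcover (g^-1 j)%g.
  exists [set g (pf t); g (ps t)]; first by apply/imsetP; exists t.
  by rewrite !inE; case: ht => <-; rewrite permKV eqxx ?orbT.
- apply/trivIsetP => A B /imsetP[t _ ->] /imsetP[u _ ->] hne.
  have htu : t != u by apply: contra hne => /eqP ->.
  rewrite -setI_eq0; apply/eqP/setP => x; rewrite !inE.
  apply/negbTE; apply/negP => /andP[h1 h2].
  move: h1 h2.
  have ne1 : pf t != pf u by rewrite (inj_eq (@pf_inj)).
  have ne2 : ps t != ps u by rewrite (inj_eq (@ps_inj)).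
  case/orP=> /eqP ->; rewrite !(inj_eq perm_inj) ?(negbTE ne1) ?(negbTE ne2)
    ?pf_ps' // ?(eq_sym (ps _)) ?pf_ps' //=.
- apply/negP => /imsetP[t _ h].
  by move/setP: h => /(_ (g (pf t))); rewrite !inE eqxx.
Qed.

Definition comp (x : {ffun J -> bool}) (g : {perm J}) : {ffun J -> bool} :=
  [ffun j => x (g j)].
Definition is10 (z : {ffun J -> bool}) (t : 'I_K) := z (pf t) && ~~ z (ps t).
Definition is01 (z : {ffun J -> bool}) (t : 'I_K) := ~~ z (pf t) && z (ps t).
Definition Cz z := [forall t, is10 z t == is01 z (ordS t)].
Definition eps z : rat := if Cz z then ((-1) ^+ #|[set t | is10 z t]|)%R else 0%R.
Definition bz z : rat := if odd (weight z) then 0%R else (1 - eps z)%R.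

Lemma bz_ge0 z : (0 <= bz z)%R.
Proof.
rewrite /bz /eps; case: ifP => // _; case: ifP => _; last by rewrite subr0.
by rewrite -signr_odd; case: odd; rewrite ?expr1 ?expr0 ?opprK ?subrr.
Qed.

Lemma bz_ext z z' : odd (weight z) = odd (weight z') -> is10 z =1 is10 z' ->
  is01 z =1 is01 z' -> bz z = bz z'.
Proof.
move=> ho h10 h01; rewrite /bz /eps ho /Cz.
rewrite (eq_forallb (fun t => congr2 eq_op (h10 t) (h01 (ordS t)))).
suff -> : [set t | is10 z t] = [set t | is10 z' t] by [].
by apply/setP => t; rewrite !inE h10.
Qed.

Lemma weight_flip1 (z : {ffun J -> bool}) (a : J) :
  (weight (flip z [set a]) + z a = weight z + ~~ z a)%N.
Proof.
rewrite /weight (cardsD1 a [set i | z i]) (cardsD1 a [set i | flip z [set a] i]).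
have -> : [set i | flip z [set a] i] :\ a = [set i | z i] :\ a.
  by apply/setP => i; rewrite !inE ffunE inE; case: eqP.
by rewrite !inE ffunE inE eqxx; case: (z a) => /=; lia.
Qed.

Lemma flip2 (z : {ffun J -> bool}) (a b : J) : a != b -> flip z [set a; b] = flip (flip z [set a]) [set b].
Proof.
move=> hab; apply/ffunP => i; rewrite !ffunE !inE.
case: (eqVneq i a) => [->|hia]; first by rewrite (negbTE hab).
by [].
Qed.

Lemma weight_flip2_neq (z : {ffun J -> bool}) (a b : J) : a != b -> z a != z b ->
  weight (flip z [set a; b]) = weight z.
Proof.
move=> hab hz; rewrite flip2 //.
have h1 := weight_flip1 z a.
have h2 := weight_flip1 (flip z [set a]) b.
move: h2; rewrite ffunE inE eq_sym (negbTE hab).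
by move: hz h1; case: (z a); case: (z b) => //= _; lia.
Qed.

Lemma odd_weight_flip2 (z : {ffun J -> bool}) (a b : J) : a != b ->
  odd (weight (flip z [set a; b])) = odd (weight z).
Proof.
move=> hab; rewrite flip2 //.
have h1 := weight_flip1 z a.
have h2 := weight_flip1 (flip z [set a]) b.
move: h2; rewrite ffunE inE eq_sym (negbTE hab) => h2.
move/(congr1 odd): h1; move/(congr1 odd): h2; rewrite !oddD.
move: (odd (weight (flip (flip z [set a]) [set b]))) (odd (weight (flip z [set a]))) (odd (weight z)) => p q r.
by case: (z a); case: (z b); case: p; case: q; case: r.
Qed.

Lemma weight_comp z g : weight (comp z g) = weight z.
Proof.
rewrite /weight -(card_preimset [set i | z i] (@perm_inj _ g)).
by apply: eq_card => i; rewrite !inE ffunE.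
Qed.

Lemma pf_neq_ps t : pf t != ps t. Proof. exact: pf_ps. Qed.

Lemma bz_swap z t :
  bz (flip z [set pf t; ps t]) = bz (comp z (tperm (pf t) (ps t))).
Proof.
have key : forall u, u != t ->
  tperm (pf t) (ps t) (pf u) = pf u /\ tperm (pf t) (ps t) (ps u) = ps u /\
  (pf u == pf t) = false /\ (ps u == ps t) = false /\ (pf u == ps t) = false /\
  (ps u == pf t) = false.
  move=> u hut.
  have h1 : pf u != pf t by rewrite (inj_eq (@pf_inj)).
  have h2 : ps u != ps t by rewrite (inj_eq (@ps_inj)).
  have h3 : pf u != ps t by apply: pf_ps.
  have h4 : ps u != pf t by rewrite eq_sym; apply: pf_ps.
  split; first by apply: tpermD; rewrite eq_sym.
  split; first by apply: tpermD; rewrite eq_sym.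
  by rewrite (negbTE h1) (negbTE h2) (negbTE h3) (negbTE h4).
apply: bz_ext.
- by rewrite odd_weight_flip2 ?pf_neq_ps // weight_comp.
- move=> u; rewrite /is10 !ffunE !inE.
  case: (eqVneq u t) => [->|hut].
    by rewrite !eqxx ?orbT /= tpermL tpermR negbK andbC.
  by have [-> [-> [-> [-> [-> ->]]]]] := key u hut.
- move=> u; rewrite /is01 !ffunE !inE.
  case: (eqVneq u t) => [->|hut].
    by rewrite !eqxx ?orbT /= tpermL tpermR negbK andbC.
  by have [-> [-> [-> [-> [-> ->]]]]] := key u hut.
Qed.

Lemma iter_ordS (t : 'I_K) m : val (iter m (@ordS K) t) = ((t + m) %% K)%N.
Proof.
elim: m => [|m IH]; first by rewrite addn0 modn_small.
by rewrite iterS /= IH -addn1 modnDml addn1 addnS.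
Qed.

Lemma cyc (y : 'I_K -> bool) : (forall t, y t -> y (ordS t)) ->
  forall t u, y t -> y u.
Proof.
move=> h t u yt.
have -> : u = iter (u + K - t) (@ordS K) t.
  apply: val_inj; rewrite iter_ordS.
  have hu := ltn_ord u; have ht := ltn_ord t.
  have -> : (t + (u + K - t) = u + K)%N by lia.
  by rewrite modnDr modn_small.
by elim: (u + K - t)%N => [|m IH] //=; apply: h.
Qed.

Definition desc (z : {ffun J -> bool}) (t : 'I_K) := z (pf t) && ~~ z (pf (ordS t)).
Definition iota (z : {ffun J -> bool}) : {ffun J -> bool} :=
  if Cz z then
    (if [pick t | desc z t] is Some t then flip z [set ps t; ps (ordS t)] else z)
  else z.
Definition constz (z : {ffun J -> bool}) := [forall j, z j] || [forall j, ~~ z j].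
Definition fz z : rat := (eps z - (constz z)%:R)%R.

Lemma const_C z : constz z -> Cz z /\ eps z = 1%R.
Proof.
case/orP => /forallP h.
  have h10 : forall t, is10 z t = false by move=> t; rewrite /is10 !h.
  have h01 : forall t, is01 z t = false by move=> t; rewrite /is01 !h.
  have hC : Cz z by apply/forallP => t; rewrite h10 h01.
  split=> //; rewrite /eps hC.
  suff -> : [set t | is10 z t] = set0 by rewrite cards0 expr0.
  by apply/setP => t; rewrite !inE h10.
have h10 : forall t, is10 z t = false by move=> t; rewrite /is10 (negbTE (h _)).
have h01 : forall t, is01 z t = false by move=> t; rewrite /is01 (negbTE (h (ps t))) andbF.
have hC : Cz z by apply/forallP => t; rewrite h10 h01.
split=> //; rewrite /eps hC.
suff -> : [set t | is10 z t] = set0 by rewrite cards0 expr0.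
by apply/setP => t; rewrite !inE h10.
Qed.

Lemma C_nodesc z : Cz z -> (forall t, ~~ desc z t) -> constz z.
Proof.
move=> /forallP hC hd.
have hy : forall t, z (pf t) -> z (pf (ordS t)).
  by move=> t ht; move: (hd t); rewrite /desc ht negbK.
case: (pickP (fun t => z (pf t))) => [t0 ht0|hn].
- have all1 : forall t, z (pf t) by move=> t; exact: (@cyc (fun t => z (pf t)) hy t0 t ht0).
  apply/orP; left; apply/forallP => j.
  have [t [->|->]] := pcover j => //.
  move: (hC t); rewrite /is10 /is01 all1 all1 /=.
  by case: (z (ps t)).
- apply/orP; right; apply/forallP => j.
  have [t [->|->]] := pcover j; first by rewrite hn.
  move: (hC (ord_pred t)); rewrite ord_predK /is10 /is01 hn /=.
  by rewrite !hn /=; case: (z (ps t)).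
Qed.

Lemma desc_nconst z t : desc z t -> ~~ constz z.
Proof.
case/andP => h1 h2; apply/negP; case/orP => /forallP h.
  by move: h2; rewrite h.
by move: (h (pf t)); rewrite h1.
Qed.

Lemma flipK2 (z : {ffun J -> bool}) S : flip (flip z S) S = z.
Proof. by apply/ffunP => i; rewrite !ffunE; case: (i \in S); rewrite ?negbK. Qed.

Lemma iota_some z t : Cz z -> desc z t ->
  let z' := flip z [set ps t; ps (ordS t)] in
  [/\ Cz z', eps z' = (- eps z)%R, weight z' = weight z, desc z' =1 desc z &
      flip z' [set ps t; ps (ordS t)] = z].
Proof.
move=> hC hd z'; set s := ordS t.
move: (hd); rewrite /desc -/s => /andP[hpt hps].
have hst : s != t.
  by apply/eqP => e; move: hps; rewrite e hpt.
have z'pf : forall u, z' (pf u) = z (pf u).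
  by move=> u; rewrite /z' ffunE !inE !pf_ps'.
have z'ps : forall u, z' (ps u) = if (u == t) || (u == s) then ~~ z (ps u) else z (ps u).
  by move=> u; rewrite /z' ffunE !inE !(inj_eq (@ps_inj)).
have hCt : ~~ z (ps t) = z (ps s).
  by move/forallP: hC => /(_ t) /eqP; rewrite /is10 /is01 -/s hpt hps.
have e10 : forall u, is10 z' u = if u == t then ~~ is10 z t else is10 z u.
  move=> u; rewrite /is10 z'pf z'ps.
  case: (eqVneq u t) => [->|hut] /=; first by rewrite hpt negbK.
  case: (eqVneq u s) => [->|hus] //=.
  by rewrite (negbTE hps).
have e01 : forall u, is01 z' u = if u == s then ~~ is01 z s else is01 z u.
  move=> u; rewrite /is01 z'pf z'ps.
  case: (eqVneq u s) => [->|hus] /=; first by rewrite (negbTE hst) orbT hps.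
  case: (eqVneq u t) => [->|hut] //=.
  by rewrite hpt.
have hC' : Cz z'.
  apply/forallP => u; rewrite e10 e01.
  have -> : (ordS u == s) = (u == t) by rewrite /s (inj_eq (@ordS_inj _)).
  case: ifP => _; last by move/forallP: hC.
  by move/forallP: hC => /(_ t) /eqP; rewrite -/s => ->.
split=> //.
- rewrite /eps hC hC'.
  rewrite (cardsD1 t [set u | is10 z' u]) (cardsD1 t [set u | is10 z u]).
  have -> : [set u | is10 z' u] :\ t = [set u | is10 z u] :\ t.
    by apply/setP => u; rewrite !inE e10; case: (eqVneq u t).
  rewrite !inE e10 eqxx.
  by case: (is10 z t); rewrite /= ?add0n ?add1n ?exprS ?mulN1r ?opprK ?mul1r.
- apply: weight_flip2_neq.
    by rewrite (inj_eq (@ps_inj)) eq_sym.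
  by rewrite -hCt; case: (z (ps t)).
- by move=> u; rewrite /desc !z'pf.
- exact: flipK2.
Qed.

Lemma iota_cases z : (iota z = z /\ fz z = 0%R) \/
  exists t, [/\ Cz z, desc z t, [pick t | desc z t] = Some t &
                iota z = flip z [set ps t; ps (ordS t)]].
Proof.
rewrite /iota; case hC: (Cz z); last first.
  left; split=> //; rewrite /fz /eps hC; case hc: (constz z); last by rewrite subr0.
  by have [] := const_C hc; rewrite hC.
case: pickP => [t ht|hn].
  by right; exists t; split.
left; split=> //.
have hc : constz z by apply: C_nodesc => // t; rewrite hn.
have [_ he] := const_C hc.
by rewrite /fz he hc subrr.
Qed.

Lemma iota_props z :
  [/\ iota (iota z) = z, weight (iota z) = weight z & fz (iota z) = (- fz z)%R].
Proof.
case: (iota_cases z) => [[e f]|[t [hC hd hp ->]]]; first by rewrite !e f oppr0.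
have [hC' he hw hdd hK] := iota_some hC hd.
have hnc := desc_nconst hd.
have hnc' : ~~ constz (flip z [set ps t; ps (ordS t)]).
  by apply: (@desc_nconst _ t); rewrite hdd.
split=> //.
- by rewrite {1}/iota hC' (eq_pick hdd) hp.
- by rewrite /fz he (negbTE hnc) (negbTE hnc') !subr0.
Qed.

Lemma sum_fz w : (\sum_(z : {ffun J -> bool} | weight z == w) fz z = 0)%R.
Proof.
have inj : injective iota.
  by apply: (can_inj (g:=iota)) => z; have [] := iota_props z.
set S := (\sum_(z | _) _)%R.
have h : S = (- S)%R.
  rewrite {1}/S (reindex_inj inj) /= -sumrN.
  apply: eq_big => z; first by have [_ -> _] := iota_props z.
  by have [_ _ ->] := iota_props z.
have : (S *+ 2 = 0)%R by rewrite mulr2n {1}h addNr.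
by move/eqP; rewrite mulrn_eq0 /= => /eqP.
Qed.

Lemma weight_le (z : {ffun J -> bool}) : (weight z <= #|J|)%N.
Proof. by rewrite /weight -cardsT subset_leq_card // subsetT. Qed.

Lemma constzE z : constz z = (weight z == 0)%N || (weight z == #|J|).
Proof.
have e1 : (#|[set i | z i]| == #|J|) = ([set i | z i] == [set: J]).
  rewrite eqEcard subsetT cardsT eqn_leq /=.
  by have := weight_le z; rewrite /weight => ->.
rewrite /constz /weight cards_eq0 e1 [RHS]orbC.
congr orb.
- apply/forallP/eqP => [h|h]; first by apply/setP => j; rewrite !inE h.
  by move=> j; move/setP: h => /(_ j); rewrite !inE.
- apply/forallP/eqP => [h|h]; first by apply/setP => j; rewrite !inE (negbTE (h j)).
  by move=> j; move/setP: h => /(_ j); rewrite !inE => ->.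
Qed.

Lemma E_eq z : EvenNAE z = ((~~ odd (weight z))%:R * (1 - (constz z)%:R))%R.
Proof.
rewrite /EvenNAE constzE; have := weight_le z.
move: (weight z) => w hw.
case: (odd w); rewrite /= ?mul0r //.
have [->|w0] := eqVneq w 0%N; first by rewrite /= subrr mulr0.
have [->|wn] := eqVneq w #|J|.
  by rewrite orbT subrr mulr0; case: #|J| => //= m; rewrite subn1 /= ltnn /= ?andbF.
rewrite /= subr0 mulr1.
have -> : (1 <= w)%N by lia.
by have -> : (w <= #|J| - 1)%N by lia.
Qed.

Lemma bz_E z : bz z = (EvenNAE z - (~~ odd (weight z))%:R * fz z)%R.
Proof.
rewrite E_eq /bz /fz; case: (odd _); rewrite /= ?mul0r ?subr0 //.
by rewrite !mul1r opprB addrA subrK.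
Qed.

Lemma sum_bz w : (\sum_(z : {ffun J -> bool} | weight z == w) bz z = \sum_(z : {ffun J -> bool} | weight z == w) EvenNAE z)%R.
Proof.
have -> : (\sum_(z : {ffun J -> bool} | weight z == w) bz z =
   \sum_(z : {ffun J -> bool} | weight z == w) (EvenNAE z - (~~ odd w)%:R * fz z))%R.
  by apply: eq_bigr => z /eqP <-; rewrite bz_E.
by rewrite sumrB -mulr_sumr sum_fz mulr0 subr0.
Qed.

Lemma weight_count (x : {ffun J -> bool}) : weight x = count id (fgraph x).
Proof.
by rewrite /weight cardsE cardE /enum_mem size_filter -codom_ffun codomE enumT count_map.
Qed.

Lemma count_bool (s : seq bool) (a : pred bool) :
  count a s = (a true * count id s + a false * (size s - count id s))%N.
Proof.
elim: s => [|b s IH] /=; first by rewrite !muln0.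
have := count_size id s.
by rewrite IH; case: b; case: (a true); case: (a false) => /=; lia.
Qed.

Lemma perm_exists (x y : {ffun J -> bool}) : weight x = weight y ->
  exists g : {perm J}, y = comp x g.
Proof.
move=> hw.
have hp : perm_eq (fgraph y) (fgraph x).
  apply/seq.permP => a; rewrite (count_bool (fgraph y)) (count_bool (fgraph x)).
  by rewrite !size_tuple -!weight_count hw.
case/tuple_permP: hp => p hp.
have hy : forall i, y (enum_val i) = x (enum_val (p i)).
  move=> i; rewrite -!tnth_fgraph.
  have -> : fgraph y = [tuple tnth (fgraph x) (p i) | i < #|J|] by apply: val_inj.
  by rewrite tnth_mktuple.
have finj : injective (fun j => enum_val (p (enum_rank j))).
  by move=> j1 j2 /enum_val_inj /perm_inj /enum_rank_inj.
exists (perm finj); apply/ffunP => j; rewrite ffunE permE.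
by rewrite -{1}(enum_rankK j) hy.
Qed.

Definition Np : rat := (\sum_(g : {perm J}) 1)%R.

Lemma Np_gt0 : (0 < Np)%R.
Proof.
rewrite /Np (bigD1 1%g) //= ltr_pwDl ?ltr01 //.
by apply: sumr_ge0 => g _; rewrite ler01.
Qed.

Lemma comp_inj (g : {perm J}) : injective (fun y => comp y g).
Proof.
move=> y1 y2 /ffunP h; apply/ffunP => j.
by have := h (g^-1 j)%g; rewrite !ffunE permKV.
Qed.

Lemma sum_perm x :
  (\sum_(g : {perm J}) bz (comp x g) = Np * EvenNAE x)%R.
Proof.
set w := weight x.
set S := (\sum_(g : {perm J}) bz (comp x g))%R.
set N := (\sum_(y : {ffun J -> bool} | weight y == w) (1 : rat))%R.
have hN : (0 < N)%R.
  rewrite /N (bigD1 x) //= ltr_pwDl ?ltr01 //.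
  by apply: sumr_ge0 => g _; rewrite ler01.
have ha : forall y, weight y == w -> (\sum_(g : {perm J}) bz (comp y g) = S)%R.
  move=> y /eqP hy; have [g0 ->] := perm_exists (esym hy).
  rewrite /S [RHS](reindex_inj (can_inj (mulgK g0))) /=.
  apply: eq_bigr => g _; congr bz; apply/ffunP => j; rewrite !ffunE permM.
  by [].
have e1 : (\sum_(y : {ffun J -> bool} | weight y == w) \sum_(g : {perm J}) bz (comp y g)
           = S * N)%R.
  rewrite /N mulr_sumr; apply: eq_bigr => y hy; rewrite mulr1; exact: ha.
have e2 : (\sum_(y : {ffun J -> bool} | weight y == w) \sum_(g : {perm J}) bz (comp y g)
           = Np * (EvenNAE x * N))%R.
  rewrite exchange_big /=.
  have -> : (\sum_(g : {perm J}) \sum_(y : {ffun J -> bool} | weight y == w) bz (comp y g)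
     = \sum_(g : {perm J}) \sum_(z : {ffun J -> bool} | weight z == w) bz z)%R.
    apply: eq_bigr => g _.
    rewrite [RHS](reindex_inj (@comp_inj g)) /=.
    by apply: eq_bigl => y; rewrite weight_comp.
  rewrite sum_bz /Np mulr_suml; apply: eq_bigr => g _; rewrite mul1r.
  rewrite /N mulr_sumr; apply: eq_bigr => z /eqP hz; rewrite mulr1.
  by rewrite /EvenNAE hz.
move: e2; rewrite e1 mulrA => /(mulIf (lt0r_neq0 hN)).
done.
Qed.

Definition Dd (x : {ffun J -> bool}) (M : {set {set J}}) : rat :=
  (Np^-1 * \sum_(g : {perm J} | pairs g == M) bz (comp x g))%R.

Lemma Dd_ge0 x M : (0 <= Dd x M)%R.
Proof.
rewrite /Dd mulr_ge0 //; first by rewrite invr_ge0 ltW // Np_gt0.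
by apply: sumr_ge0 => g _; exact: bz_ge0.
Qed.

Lemma Dd_sum x :
  EvenNAE x = (\sum_(M : {set {set J}} | pair_partition M) Dd x M)%R.
Proof.
rewrite /Dd -mulr_sumr.
have -> : (\sum_(M : {set {set J}} | pair_partition M)
      \sum_(g : {perm J} | pairs g == M) bz (comp x g) =
    \sum_(g : {perm J}) bz (comp x g))%R.
  rewrite [RHS](partition_big (fun g => pairs g) (fun M => pair_partition M)) /=.
    by [].
  by move=> g _; exact: pp_pairs.
by rewrite sum_perm mulrA mulVf ?mul1r // lt0r_neq0 // Np_gt0.
Qed.

Lemma pairs_tperm (g : {perm J}) t u :
  [set (tperm (pf t) (ps t) * g)%g (pf u); (tperm (pf t) (ps t) * g)%g (ps u)] =
  [set g (pf u); g (ps u)].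
Proof.
rewrite !permM.
case: (eqVneq u t) => [->|hut]; first by rewrite tpermL tpermR setUC.
have h1 : pf u != pf t by rewrite (inj_eq (@pf_inj)).
have h2 : ps u != ps t by rewrite (inj_eq (@ps_inj)).
rewrite !tpermD //; rewrite eq_sym //.
- by rewrite eq_sym pf_ps.
- exact: pf_ps.
Qed.

Definition rho (S : {set J}) (g : {perm J}) : {perm J} :=
  if [pick t | [set g (pf t); g (ps t)] == S] is Some t
  then (tperm (pf t) (ps t) * g)%g else g.

Lemma rho_pair S g u :
  [set rho S g (pf u); rho S g (ps u)] = [set g (pf u); g (ps u)].
Proof. by rewrite /rho; case: pickP => [t _|//]; rewrite pairs_tperm. Qed.

Lemma rho_pick S g :
  [pick t | [set rho S g (pf t); rho S g (ps t)] == S] =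
  [pick t | [set g (pf t); g (ps t)] == S].
Proof. by apply: eq_pick => u /=; rewrite rho_pair. Qed.

Lemma rhoK S : involutive (rho S).
Proof.
move=> g; rewrite {1}/rho rho_pick /rho.
case: pickP => [t _|//].
by rewrite mulgA tperm2 mul1g.
Qed.

Lemma pairs_rho S g : pairs (rho S g) = pairs g.
Proof. by apply: eq_imset => u; rewrite rho_pair. Qed.

Lemma Dd_inv x (M : {set {set J}}) S : S \in M -> Dd (flip x S) M = Dd x M.
Proof.
move=> hS; rewrite /Dd; congr (_ * _)%R.
rewrite [RHS](reindex_inj (can_inj (rhoK S))) /=.
apply: eq_big => g; first by rewrite pairs_rho.
move=> /eqP hg.
have : S \in pairs g by rewrite hg.
case/imsetP => t0 _ hS0.
rewrite /rho; case: pickP => [t /eqP ht|hn]; last by move: (hn t0); rewrite -hS0 eqxx.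
have -> : comp (flip x S) g = flip (comp x g) [set pf t; ps t].
  apply/ffunP => j; rewrite !ffunE -ht !inE !(inj_eq perm_inj).
  by [].
rewrite bz_swap; congr bz; apply/ffunP => j; rewrite !ffunE permM.
by [].
Qed.
End Constr.

Unset Implicit Arguments.

Theorem lemma12 (J : finType) (hJ : ~~ odd #|J|) :
  has_2_decomposition (@EvenNAE J).
Proof.
exists (@Dd J hJ); split.
- by move=> x M _; exact: Dd_ge0.
- by move=> x; exact: Dd_sum.
- by move=> x M S _ hS; exact: Dd_inv.
Qed.
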